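(* Let $n\ge 3$ and let $(a_{\mathbf{i}})_{\mathbf{i}\in\mathbb{Z}^n}$ be either an $\mathrm{SL}_2$-tiling or an anti-$\mathrm{SL}_2$-tiling of $\mathbb{Z}^n$. Then for every $r\in\mathbb{Z}$, the value $a_{\mathbf{i}}$ is the same for all $\mathbf{i}=(i_1,\dots,i_n)\in\mathbb{Z}^n$ with $i_1+\dots+i_n=r$.
   Context: Write $\mathbf{i}=(i_1,\dots,i_n)\in\mathbb{Z}^n$ and $\mathbf{e}_k$ for the $k$-th standard unit vector. An $\mathrm{SL}_2$-tiling (resp. anti-$\mathrm{SL}_2$-tiling) of $\mathbb{Z}^n$ is an array $(a_{\mathbf{i}})_{\mathbf{i}\in\mathbb{Z}^n}$ with all $a_{\mathbf{i}}\in\mathbb{Z}_{>0}$ such that for all $\mathbf{i}\in\mathbb{Z}^n$ and all $k\ne\ell$: $a_{\mathbf{i}+\mathbf{e}_\ell}a_{\mathbf{i}+\mathbf{e}_k}-a_{\mathbf{i}}a_{\mathbf{i}+\mathbf{e}_k+\mathbf{e}_\ell}=1$ (resp. $=-1$). *)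

(* Defs.v *)
From HB Require Import structures.
From mathcomp Require Import all_boot all_order all_algebra.
Set Implicit Arguments. Unset Strict Implicit. Unset Printing Implicit Defensive.
Import Order.TTheory GRing.Theory Num.Theory.
Local Open Scope ring_scope.

Definition unitv (n : nat) (k : 'I_n) : {ffun 'I_n -> int} :=
  [ffun j => if j == k then 1 else 0].

Definition tiling_with (n : nat) (eps : int) (a : {ffun 'I_n -> int} -> int) : Prop :=
  (forall i, 0 < a i) /\
  (forall (i : {ffun 'I_n -> int}) (k l : 'I_n), k != l ->
     a (i + unitv l) * a (i + unitv k) - a i * a (i + unitv k + unitv l) = eps).

Definition SL2_tiling (n : nat) (a : {ffun 'I_n -> int} -> int) : Prop :=
  tiling_with 1 a.

Definition antiSL2_tiling (n : nat) (a : {ffun 'I_n -> int} -> int) : Prop :=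
  tiling_with (-1) a.

Definition coord_sum (n : nat) (i : {ffun 'I_n -> int}) : int := \sum_(k < n) i k.

(* Main.v *)
Require Import Defs.
From HB Require Import structures.
From mathcomp Require Import all_boot all_order all_algebra.
From mathcomp Require Import ring lra zify.
Import Order.TTheory GRing.Theory Num.Theory.
Local Open Scope ring_scope.

Lemma key_alg {eps x bk bl bm ckl ckm clm d : int} :
  (eps = 1 \/ eps = -1) -> 0 < x -> 0 < bk -> 0 < bl ->
  bl * bk - x * ckl = eps ->
  bm * bk - x * ckm = eps ->
  bm * bl - x * clm = eps ->
  ckm * ckl - bk * d = eps ->
  clm * ckl - bl * d = eps ->
  bk = bl.
Proof.
move=> he hx hk hl h1 h2 h3 h4 h5.
have e1 : x^+2 * bk * d = (bk*bl-eps)*(bk*bm-eps) - x^+2*eps.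
  have -> : x^+2 * bk * d = (x*ckl)*(x*ckm) - x^+2 * (ckm*ckl - bk*d) by ring.
  have -> : x*ckl = bk*bl-eps by rewrite -h1; ring.
  have -> : x*ckm = bk*bm-eps by rewrite -h2; ring.
  by rewrite h4.
have e2 : x^+2 * bl * d = (bk*bl-eps)*(bl*bm-eps) - x^+2*eps.
  have -> : x^+2 * bl * d = (x*ckl)*(x*clm) - x^+2 * (clm*ckl - bl*d) by ring.
  have -> : x*ckl = bk*bl-eps by rewrite -h1; ring.
  have -> : x*clm = bl*bm-eps by rewrite -h3; ring.
  by rewrite h5.
have e3 : eps * ((bk - bl) * (bk*bl - eps + x^+2)) = 0.
  have -> : eps * ((bk - bl) * (bk*bl - eps + x^+2)) =
     bl * ((bk*bl-eps)*(bk*bm-eps) - x^+2*eps) - bk * ((bk*bl-eps)*(bl*bm-eps) - x^+2*eps) by ring.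
  by rewrite -e1 -e2; ring.
have hq : bk*bl - eps + x^+2 != 0.
  have : 0 < bk * bl by rewrite mulr_gt0.
  have : 0 < x^+2 by rewrite exprn_gt0.
  case: he => ->; lia.
have hne : eps != 0 by case: he => ->.
move/eqP: e3; rewrite mulf_eq0 (negbTE hne) /= mulf_eq0 (negbTE hq) orbF subr_eq0.
by move/eqP.
Qed.

Section S.
Variables (n : nat) (hn : (3 <= n)%N) (eps : int) (a : {ffun 'I_n -> int} -> int).
Hypothesis he : eps = 1 \/ eps = -1.
Hypothesis ht : tiling_with eps a.

Lemma third (k l : 'I_n) : exists m : 'I_n, (m != k) && (m != l).
Proof.
have h0 : (0 < n)%N by lia.
have h1 : (1 < n)%N by lia.
have h2 : (2 < n)%N by lia.
pose m0 := Ordinal h0; pose m1 := Ordinal h1; pose m2 := Ordinal h2.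
have d01 : m0 != m1 by [].
have d02 : m0 != m2 by [].
have d12 : m1 != m2 by [].
case: (eqVneq m0 k) => [<-|h0k].
  case: (eqVneq m1 l) => [<-|h1l]; first by exists m2.
  by exists m1; rewrite h1l.
case: (eqVneq m0 l) => [<-|h0l]; last by exists m0; rewrite h0k h0l.
case: (eqVneq m1 k) => [<-|h1k]; first by exists m2.
by exists m1; rewrite h1k.
Qed.

Lemma step (i : {ffun 'I_n -> int}) (k l : 'I_n) : a (i + unitv k) = a (i + unitv l).
Proof.
case: (eqVneq k l) => [->//|hkl].
have [m /andP[hmk hml]] := third k l.
case: ht => hpos hrel.
have hkm : k != m by rewrite eq_sym.
have hlm : l != m by rewrite eq_sym.
have h1 := hrel i k l hkl.
have h2 := hrel i k m hkm.
have h3 := hrel i l m hlm.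
have h4 := hrel (i + unitv k) l m hlm.
have h5 := hrel (i + unitv l) k m hkm.
rewrite (addrAC i (unitv l) (unitv k)) in h5.
exact: (key_alg he (hpos i) (hpos _) (hpos _) h1 h2 h3 h4 h5).
Qed.

Lemma move1 (x : {ffun 'I_n -> int}) (k l : 'I_n) : a (x + (unitv k - unitv l)) = a x.
Proof.
have := step (x - unitv l) k l.
rewrite subrK => <-; congr a.
by rewrite addrAC addrA.
Qed.

Lemma move1N (x : {ffun 'I_n -> int}) (k l : 'I_n) : a (x - (unitv k - unitv l)) = a x.
Proof. by rewrite -{2}(subrK (unitv k - unitv l) x) move1. Qed.

Lemma moveZ (x : {ffun 'I_n -> int}) (k l : 'I_n) (c : int) :
  a (x + (unitv k - unitv l) *~ c) = a x.
Proof.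
case: c => m.
  elim: m x => [|m IH] x; first by rewrite mulr0z addr0.
  by rewrite -pmulrn mulrSr addrA move1 IH.
elim: m x => [|m IH] x; first by rewrite NegzE mulrNz mulr1z move1N.
rewrite NegzE mulrNz -pmulrn mulrSr opprD addrA move1N.
by have := IH x; rewrite NegzE mulrNz -pmulrn.
Qed.

End S.

Lemma ffun_mulrz (m : nat) (f : {ffun 'I_m -> int}) (c : int) (j : 'I_m) :
  (f *~ c) j = f j * c.
Proof.
have hn : forall p : nat, (f *+ p) j = f j *+ p.
  by elim=> [|p IH]; rewrite ?mulr0n ?ffunE // !mulrS ffunE IH.
case: c => p.
  by rewrite -pmulrn hn pmulrn -mulrzr intz.
by rewrite NegzE mulrNz -pmulrn ffunE hn pmulrn -mulrzr intz mulrN.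
Qed.

Lemma canon (n : nat) (hn : (3 <= n)%N) (eps : int) (a : {ffun 'I_n -> int} -> int)
  (he : eps = 1 \/ eps = -1) (ht : tiling_with eps a) (k0 : 'I_n)
  (c : 'I_n -> int) (s : seq 'I_n) (x : {ffun 'I_n -> int}) :
  a (x + \sum_(k <- s) (unitv k0 - unitv k) *~ c k) = a x.
Proof.
elim: s x => [|k s IH] x; first by rewrite big_nil addr0.
by rewrite big_cons addrCA addrC (@moveZ n hn eps a he ht) IH.
Qed.

Lemma canon_eq (n : nat) (k0 : 'I_n) (i : {ffun 'I_n -> int}) :
  i + \sum_(k < n) (unitv k0 - unitv k) *~ i k = unitv k0 *~ coord_sum i.
Proof.
apply/ffunP => j; rewrite ffunE sum_ffunE ffun_mulrz /coord_sum.
under eq_bigr => k _ do rewrite ffun_mulrz !ffunE mulrDl mulNr.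
rewrite sumrB -mulr_sumr.
rewrite /unitv ffunE.
have -> : \sum_(i0 < n) (if j == i0 then 1 else 0) * i i0 = i j.
  rewrite (bigD1 j) //= eqxx mul1r big1 ?addr0 // => k hk.
  by rewrite eq_sym (negbTE hk) mul0r.
by rewrite addrC subrK.
Qed.

Theorem lemma2p2 (n : nat) (hn : (3 <= n)%N) (a : {ffun 'I_n -> int} -> int) :
  SL2_tiling a \/ antiSL2_tiling a ->
  forall (r : int) (i j : {ffun 'I_n -> int}),
    coord_sum i = r -> coord_sum j = r -> a i = a j.
Proof.
move=> H r i j hi hj.
have [eps [he ht]] : exists eps : int, (eps = 1 \/ eps = -1) /\ tiling_with eps a.
  by case: H => h; [exists 1 | exists (-1)]; split; auto.
have h0 : (0 < n)%N by apply: leq_trans hn.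
pose k0 : 'I_n := Ordinal h0.
rewrite -(@canon n hn eps a he ht k0 (fun k => i k) (index_enum _) i).
rewrite -(@canon n hn eps a he ht k0 (fun k => j k) (index_enum _) j).
by rewrite !canon_eq hi hj.
Qed.
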